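(* Assume there is $\alpha_l\in\mathcal{K}_\infty$ with $\alpha_l(|x|)\le\inf_{u\in\mathbb{R}^m}l(x,u)$ for all $x\in\mathbb{R}^n$. Assume all finite-horizon infima below are attained, and that there exist $\underline N\in\mathbb{N}$ and $\alpha\in(0,1]$ such that for every horizon $M\ge\underline N$, every $x\in\mathbb{R}^n$ and every optimal sequence $u^\ast(\cdot;x)$ for $V_M(x)$, $$V_M\big(f(x,u^\ast(0;x))\big)+\alpha\, l(x,u^\ast(0;x))\le V_M(x).$$ Let $N\ge\underline N$, let $\hat V^0\equiv 0$ and let $\hat V^{i}$ be generated by the recursion $\hat V^{i+1}(x)=\inf_{u(\cdot;x)}\sum_{k=0}^{N-1}l(x_u(k;x),u(k;x))+\hat V^i(x_u(N;x))$. Take terminal costs $F^i=\hat V^i$. Then for every $i\in\mathbb{N}_0$ and every $x\in\mathbb{R}^n$, $$\mathcal{V}_N\big(f(x,\kappa_N(x,i)),i\big)\le \mathcal{V}_N(x,i)-\alpha\,\alpha_l(|x|).$$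
   Context: Dynamics $x^+=f(x,u)$, $f$ continuous, $f(0,0)=0$; $x_u(k;x)$ is the state trajectory from $x$ under the input sequence $u(\cdot;x)$. Stage cost $l\ge0$ positive definite. $V_M(x)=\inf_{u(\cdot;x)\in\mathbb{R}^{m\times M}}\sum_{k=0}^{M-1}l(x_u(k;x),u(k;x))$ is the optimal $M$-horizon cost without terminal cost. For a sequence of positive definite terminal costs $F^i:\mathbb{R}^n\to\mathbb{R}_{\ge0}$, $\mathcal{V}_N(x,i)=\inf_{u(\cdot;x)\in\mathbb{R}^{m\times N}}\sum_{k=0}^{N-1}l(x_u(k;x),u(k;x))+F^i(x_u(N;x))$, and $\kappa_N(x,i)=u^\ast(0;x,i)$ is the first element of an optimizing sequence of this problem. $\mathcal{K}_\infty$: continuous, zero at zero, strictly increasing, unbounded functions $\mathbb{R}_{\ge0}\to\mathbb{R}_{\ge0}$. *)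

(* Defs.v *)
From HB Require Import structures.
From mathcomp Require Import all_boot all_order all_algebra.
From mathcomp Require Import all_classical all_reals all_analysis.
Set Implicit Arguments. Unset Strict Implicit. Unset Printing Implicit Defensive.
Import Order.TTheory GRing.Theory Num.Theory.
Import numFieldNormedType.Exports.
Local Open Scope classical_set_scope.
Local Open Scope ring_scope.

Section Defs.
Variables (R : realType) (n m : nat).
Notation X := 'rV[R]_n.
Notation U := 'rV[R]_m.

Definition enorm (x : X) : R := Num.sqrt (\sum_(i < n) (x ord0 i) ^+ 2).

(* class K_infinity (functions on R>=0, represented as R -> R) *)
Definition Kinf (a : R -> R) : Prop :=
  [/\ {within [set r : R | 0 <= r], continuous a},
      a 0 = 0,
      (forall r s : R, 0 <= r -> r < s -> a r < a s) &
      (forall M : R, exists r : R, 0 <= r /\ M < a r)].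

Fixpoint traj (f : X -> U -> X) (x : X) (u : nat -> U) (k : nat) : X :=
  match k with
  | 0 => x
  | k'.+1 => f (traj f x u k') (u k')
  end.

Definition cost (f : X -> U -> X) (l : X -> U -> R) (F : X -> R) (M : nat)
  (x : X) (u : nat -> U) : R :=
  \sum_(k < M) l (traj f x u k) (u k) + F (traj f x u M).

Definition Vopt f l F M (x : X) : R := inf (range (cost f l F M x)).

Definition VM f l M (x : X) : R := Vopt f l (fun _ => 0) M x.

Fixpoint Vhat f l (N : nat) (i : nat) : X -> R :=
  match i with
  | 0 => fun _ => 0
  | i'.+1 => fun x => Vopt f l (Vhat f l N i') N x
  end.

Definition calV f l N (x : X) (i : nat) : R := Vopt f l (Vhat f l N i) N x.

End Defs.

(* Main.v *)
Require Import Defs.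
From HB Require Import structures.
From mathcomp Require Import all_boot all_order all_algebra.
From mathcomp Require Import all_classical all_reals all_analysis.
Import Order.TTheory GRing.Theory Num.Theory.
Import numFieldNormedType.Exports.
Local Open Scope classical_set_scope.
Local Open Scope ring_scope.

Section Helpers.
Variables (R : realType) (n m : nat).
Variables (f : 'rV[R]_n -> 'rV[R]_m -> 'rV[R]_n) (l : 'rV[R]_n -> 'rV[R]_m -> R).
Hypothesis l_ge0 : forall x u, 0 <= l x u.

Lemma traj_ext x (u u' : nat -> 'rV[R]_m) k :
  (forall j, (j < k)%N -> u j = u' j) -> traj f x u k = traj f x u' k.
Proof.
elim: k => [|k IH] H //=.
rewrite IH ?H //; move=> j hj; apply: H; exact: ltnW.
Qed.

Lemma traj_shift x (v : nat -> 'rV[R]_m) M k :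
  traj f x v (M + k) = traj f (traj f x v M) (fun j => v (M + j)%N) k.
Proof. by elim: k => [|k IH]; rewrite ?addn0 // addnS /= IH. Qed.

Lemma inf_le_elt (S : set R) s : (forall y, S y -> 0 <= y) -> S s -> inf S <= s.
Proof. move=> H Ss; apply: ge_inf => //; by exists 0. Qed.

Lemma VM_ge0 K y : 0 <= VM f l K y.
Proof.
apply: lb_le_inf; first by exists (cost f l (fun _ => 0) K y (fun _ => 0)); exists (fun _ => 0).
move=> z [u _ <-]; rewrite /cost addr0; apply: sumr_ge0 => k _; exact: l_ge0.
Qed.

Lemma cost_ge0 F K y u : (forall z, 0 <= F z) -> 0 <= cost f l F K y u.
Proof.
move=> HF; rewrite /cost; apply: addr_ge0 => //; apply: sumr_ge0 => k _; exact: l_ge0.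
Qed.

Lemma cost_split K M x (v : nat -> 'rV[R]_m) :
  cost f l (fun _ => 0) (M + K) x v =
  \sum_(k < M) l (traj f x v k) (v k)
    + cost f l (fun _ => 0) K (traj f x v M) (fun j => v (M + j)%N).
Proof.
rewrite /cost !addr0 big_split_ord /=; congr (_ + _).
apply: eq_bigr => k _ /=; by rewrite traj_shift.
Qed.


Lemma cost_concat K M x (u w : nat -> 'rV[R]_m) :
  cost f l (fun _ => 0) (M + K) x (fun k => if (k < M)%N then u k else w (k - M)%N) =
  \sum_(k < M) l (traj f x u k) (u k) + cost f l (fun _ => 0) K (traj f x u M) w.
Proof.
set v := fun k => if (k < M)%N then u k else w (k - M)%N.
have Htr : forall k, (k <= M)%N -> traj f x v k = traj f x u k.
  move=> k hk; apply: traj_ext => j hj.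
  have hjM : (j < M)%N by apply: leq_trans hk.
  by rewrite /v hjM.
have Hv : forall k, v (M + k)%N = w k.
  by move=> k; rewrite /v ltnNge leq_addr /= addKn.
have Hw : forall k, traj f x v (M + k) = traj f (traj f x u M) w k.
  move=> k; rewrite traj_shift Htr //; apply: traj_ext => j _; exact: Hv.
have Hfv : (fun j => v (M + j)%N) = w by apply: boolp.funext.
rewrite cost_split Hfv Htr //; congr (_ + _).
apply: eq_bigr => k _ /=.
have hk : (k < M)%N by [].
by rewrite Htr ?(ltnW hk) // /v hk.
Qed.
Hypothesis attain : forall M x, exists u, cost f l (fun _ => 0) M x u = VM f l M x.

Lemma DP K M y : Vopt f l (VM f l K) M y = VM f l (M + K) y.
Proof.
apply/le_anti/andP; split.
- have [v hv] := attain (M + K) y.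
  apply: (@le_trans _ _ (cost f l (VM f l K) M y v)).
    apply: inf_le_elt; last by exists v.
    move=> z [u _ <-]; apply: cost_ge0; exact: VM_ge0.
  rewrite -hv cost_split /cost lerD2l.
  apply: inf_le_elt; last by exists (fun j => v (M + j)%N).
  move=> z [u _ <-]; rewrite /cost addr0; apply: sumr_ge0 => k _; exact: l_ge0.
- apply: lb_le_inf; first by exists (cost f l (VM f l K) M y (fun _ => 0)); exists (fun _ => 0).
  move=> z [u _ <-].
  have [w hw] := attain K (traj f y u M).
  have -> : cost f l (VM f l K) M y u =
    cost f l (fun _ => 0) (M + K) y (fun k => if (k < M)%N then u k else w (k - M)%N).
    by rewrite cost_concat hw.
  apply: inf_le_elt; last by eexists.
  move=> z' [u' _ <-]; exact: cost_ge0.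
Qed.

Lemma Vhat_VM N i x : Vhat f l N i x = VM f l (i * N) x.
Proof.
elim: i x => [|i IH] x /=.
  rewrite mul0n /VM /Vopt.
  have -> : range (cost f l (fun _ => 0) 0 x) = [set 0].
    apply/seteqP; split => z.
      by move=> [u _ <-]; rewrite /cost big_ord0 addr0.
    by move=> ->; exists (fun _ => 0) => //; rewrite /cost big_ord0 addr0.
  by rewrite inf1.
have -> : Vhat f l N i = VM f l (i * N) by apply: boolp.funext.
by rewrite DP mulSn.
Qed.

End Helpers.

Theorem proposition3 (R : realType) (n m : nat)
  (f : 'rV[R]_n -> 'rV[R]_m -> 'rV[R]_n) (l : 'rV[R]_n -> 'rV[R]_m -> R)
  (alpha_l : R -> R) (Nlow : nat) (alpha : R) (N : nat) :
  continuous (fun p : 'rV[R]_n * 'rV[R]_m => f p.1 p.2) ->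
  f 0 0 = 0 ->
  (forall x u, 0 <= l x u) ->
  l 0 0 = 0 ->
  (forall x u, (x, u) != (0, 0) -> 0 < l x u) ->
  Kinf alpha_l ->
  (forall x, alpha_l (enorm x) <= inf (range (l x))) ->
  (* all finite-horizon infima are attained *)
  (forall M x, exists u, cost f l (fun _ => 0) M x u = VM f l M x) ->
  (forall i x, exists u, cost f l (Vhat f l N i) N x u = calV f l N x i) ->
  0 < alpha -> alpha <= 1 ->
  (forall M x (ustar : nat -> 'rV[R]_m), (Nlow <= M)%N ->
     cost f l (fun _ => 0) M x ustar = VM f l M x ->
     VM f l M (f x (ustar 0%N)) + alpha * l x (ustar 0%N) <= VM f l M x) ->
  (Nlow <= N)%N ->
  forall (i : nat) (x : 'rV[R]_n) (ustar : nat -> 'rV[R]_m),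
    cost f l (Vhat f l N i) N x ustar = calV f l N x i ->
    calV f l N (f x (ustar 0%N)) i <= calV f l N x i - alpha * alpha_l (enorm x).
Proof.
move=> _ _ l0 _ _ _ Hal att _ a0 _ Hdec HN i x us Hus.
have HV : Vhat f l N i = VM f l (i * N) by apply: boolp.funext => y; apply: Vhat_VM.
have Hc : forall y, calV f l N y i = VM f l (N + i * N) y.
  by move=> y; rewrite /calV HV DP.
have Hl : alpha_l (enorm x) <= l x (us 0%N).
  apply: (le_trans (Hal x)); apply: inf_le_elt; last by exists (us 0%N).
  by move=> z [u _ <-].
rewrite !Hc lerBrDr.
have Hal2 : alpha * alpha_l (enorm x) <= alpha * l x (us 0%N) by rewrite ler_wpM2l // ltW.
suff H : VM f l (N + i * N) (f x (us 0%N)) + alpha * l x (us 0%N) <= VM f l (N + i * N) x.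
  by apply: le_trans H; rewrite lerD2l.
case: N HN Hus HV Hc => [|N] HN Hus HV Hc.
  have H0 : forall y, VM f l 0 y = 0.
    by move=> y; have := @Vhat_VM R n m f l l0 att 0 0 y; rewrite mul0n /=.
  rewrite muln0 addn0; apply: Hdec => //.
  by rewrite H0 /cost big_ord0 /= add0r.
have [w hw] := att (i * N.+1)%N (traj f x us N.+1).
pose v := fun k => if (k < N.+1)%N then us k else w (k - N.+1)%N.
have -> : us 0%N = v 0%N by [].
apply: Hdec => //; first by apply: leq_trans HN (leq_addr _ _).
rewrite cost_concat hw -Hc /calV HV.
by rewrite -HV; exact: Hus.
Qed.
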